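(* Let $R$ be a commutative ring endowed with a translation-invariant partial order $\le$ on its additive group such that $R^+$ is stable under multiplication with squares, i.e. $r^2s\in R^+$ for all $r\in R$, $s\in R^+$. If $R$ is archimedean and localizable, then $pq\in R^+$ for all $p,q\in R^+$ (so $R$ is a partially ordered commutative ring).
   Context: Rings are commutative with unit $1$; $\mathbb{N}=\{1,2,\dots\}$. Translation-invariant means $r\le s$ implies $r+t\le s+t$; $R^+=\{r:0\le r\}$. A partially ordered commutative ring is such a ring whose positive cone is closed under multiplication and contains all squares. $R$ is archimedean if whenever $g,h\in R$ satisfy $kg+h\in R^+$ for all $k\in\mathbb{N}$, then $g\in R^+$. $\mathrm{Loc}(R)$ is the set of $s\in 1+R^+$ such that for all $r\in R$, $rs\in R^+$ implies $r\in R^+$. $R$ is localizable if for every $r\in R$ there exists $s\in\mathrm{Loc}(R)$ with $-s\le r\le s$. *)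

(* Defs.v *)
From mathcomp Require Import all_boot all_algebra.
Set Implicit Arguments. Unset Strict Implicit. Unset Printing Implicit Defensive.
Import GRing.Theory.
Local Open Scope ring_scope.

Definition partial_order (R : Type) (le : R -> R -> Prop) : Prop :=
  (forall x, le x x) /\
  (forall x y, le x y -> le y x -> x = y) /\
  (forall x y z, le x y -> le y z -> le x z).

Definition translation_invariant (R : comPzRingType) (le : R -> R -> Prop) :=
  forall r s t : R, le r s -> le (r + t) (s + t).

Definition posc (R : comPzRingType) (le : R -> R -> Prop) (r : R) : Prop :=
  le 0 r.

Definition square_mul_stable (R : comPzRingType) (le : R -> R -> Prop) :=
  forall r s : R, posc le s -> posc le (r ^+ 2 * s).

Definition archimedean (R : comPzRingType) (le : R -> R -> Prop) :=
  forall g h : R, (forall k : nat, (1 <= k)%N -> posc le (g *+ k + h)) ->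
    posc le g.

Definition Loc (R : comPzRingType) (le : R -> R -> Prop) (s : R) : Prop :=
  (exists t, posc le t /\ s = 1 + t) /\
  (forall r : R, posc le (r * s) -> posc le r).

Definition localizable (R : comPzRingType) (le : R -> R -> Prop) :=
  forall r : R, exists s, Loc le s /\ le (- s) r /\ le r s.

(* Main.v *)
Require Import Defs.
From mathcomp Require Import all_boot all_algebra.
From mathcomp Require Import ring.
Local Open Scope ring_scope.
Import GRing.Theory.

Theorem proposition5 (R : comPzRingType) (le : R -> R -> Prop) :
  partial_order le ->
  translation_invariant le ->
  square_mul_stable le ->
  archimedean le ->
  localizable le ->
  forall p q : R, posc le p -> posc le q -> posc le (p * q).
Proof.
move=> [Hrefl [Hanti Htrans]] Htr Hsq Harch Hloc.
have Padd : forall x y, posc le x -> posc le y -> posc le (x + y).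
  move=> x y Hx Hy; have := Htr 0 x y Hx; rewrite add0r => H.
  exact: Htrans Hy H.
have PleqF : forall x y, le x y -> posc le (y - x).
  move=> x y H; have := Htr x y (- x) H; by rewrite subrr.
have P1 : posc le 1.
  have [s [[_ Hd] [_ H2]]] := Hloc 0; apply: (Hd); by rewrite mul1r.
have Psq1 : forall a, posc le (a ^+ 2).
  by move=> a; have := Hsq a 1 P1; rewrite mulr1.
have Pnat : forall x k, posc le x -> posc le (x *+ k).
  move=> x k Hx; elim: k => [|k IH]; first by rewrite mulr0n; exact: Hrefl.
  by rewrite mulrS; apply: (Padd).
have Lnat : forall X n, posc le (X *+ n.+1) -> posc le X.
  move=> X n HX.
  have [T [[[t0 [Pt0 ET]] _] [H1 H2]]] := Hloc X.
  have PT : posc le T by rewrite ET; apply: (Padd).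
  have PXT : posc le (X + T) by have := PleqF _ _ H1; rewrite opprK.
  apply: (Harch X (T *+ n)) => k _.
  have -> : X *+ k + T *+ n = (X *+ n.+1) *+ (k %/ n.+1)
      + ((X + T) *+ (k %% n.+1) + T *+ (n - k %% n.+1)).
    have Hr : (k %% n.+1 <= n)%N by rewrite -ltnS ltn_mod.
    have -> : T *+ n = T *+ (k %% n.+1) + T *+ (n - k %% n.+1)
      by rewrite -mulrnDr subnKC.
    rewrite {1}(divn_eq k n.+1); ring.
  by apply: (Padd); [apply: (Pnat) | apply: (Padd); apply: (Pnat)].
pose Dv e := forall X, posc le (X * e) -> posc le X.
have DvM : forall a b, Dv a -> Dv b -> Dv (a * b).
  by move=> a b Ha Hb X H; apply: (Ha); apply: (Hb); rewrite -mulrA.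
have Pair : forall D a, Dv D -> posc le a -> posc le (D - a) ->
    posc le (a * (D - a)).
  move=> D a HD Ha HDa; apply: (HD).
  have -> : a * (D - a) * D = a ^+ 2 * (D - a) + (D - a) ^+ 2 * a by ring.
  by apply: (Padd); apply: (Hsq).
move=> p q Pp Pq.
have [s [[_ Ds] [_ Hs]]] := Hloc (p + q).
have Hs' := PleqF _ _ Hs.
have Psp : posc le (s - p).
  have -> : s - p = (s - (p + q)) + q by ring.
  by apply: (Padd).
have Psq : posc le (s - q).
  have -> : s - q = (s - (p + q)) + p by ring.
  by apply: (Padd).
have Pqs : posc le (q * s).
  have -> : q * s = q * (s - q) + q ^+ 2 by ring.
  by apply: (Padd); [apply: (Pair) | apply: (Psq1)].
have Claim : forall j m e W, Dv e -> posc le W ->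
    posc le (e ^+ 2 - W *+ m.+2) ->
    posc le (s * (e ^+ 2 * s + (W * q) *+ (m.+2 + j))).
  elim=> [|j IH] m e W He PW HeW.
  - rewrite addn0.
    set D := e ^+ 2.
    set A := W *+ m.+2.
    have DvD : Dv D by rewrite /D expr2; apply: (DvM).
    have PA : posc le A by apply: (Pnat).
    have PAD := Pair D A DvD PA HeW.
    have PDA : posc le (D ^+ 2 - A ^+ 2).
      have -> : D ^+ 2 - A ^+ 2 = (D - A) ^+ 2 + (A * (D - A)) *+ 2 by ring.
      by apply: (Padd); [apply: (Psq1) | apply: (Pnat)].
    have Psq2 : posc le (s ^+ 2 - q ^+ 2).
      have -> : s ^+ 2 - q ^+ 2 = (s - q) ^+ 2 + (q * (s - q)) *+ 2 by ring.
      by apply: (Padd); [apply: (Psq1) | apply: (Pnat); apply: (Pair)].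
    apply: (DvD); apply: (Lnat _ 1).
    have -> : (W * q) *+ m.+2 = A * q by rewrite /A mulrnAl.
    have -> : s * (D * s + A * q) * D *+ 2 =
      (A * s + q * D) ^+ 2 + s ^+ 2 * (D ^+ 2 - A ^+ 2)
        + D ^+ 2 * (s ^+ 2 - q ^+ 2) by ring.
    by apply: (Padd); [apply: (Padd); [apply: (Psq1) | apply: (Hsq)] | apply: (Hsq)].
  - set D := e ^+ 2.
    have DvD : Dv D by rewrite /D expr2; apply: (DvM).
    pose W' := W * D - W ^+ 2.
    have PDW : posc le (D - W).
      have -> : D - W = (D - W *+ m.+2) + W *+ m.+1 by rewrite mulrS; ring.
      by apply: (Padd) => //; apply: (Pnat).
    have PW' : posc le W'.
      have -> : W' = W * (D - W) by rewrite /W'; ring.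
      exact: (Pair).
    have PB : posc le (D ^+ 2 - W' *+ m.+3).
      apply: (Lnat _ ((m.+2 * m.+2).-1)); rewrite prednK; last by [].
      have -> : (D ^+ 2 - W' *+ m.+3) *+ (m.+2 * m.+2) =
        ((W *+ m.+2 - D) ^+ 2) *+ m.+3
          + ((D - W *+ m.+2) * e ^+ 2) *+ (m.+3 * m) + D ^+ 2
        by rewrite /W' /D; ring.
      apply: (Padd); last exact: (Psq1).
      apply: (Padd); apply: (Pnat); first exact: (Psq1).
      by rewrite mulrC; apply: (Hsq).
    have := IH m.+1 D W' DvD PW' PB.
    rewrite addSnnS => H.
    apply: (DvD).
    have -> : s * (D * s + (W * q) *+ (m.+2 + j.+1)) * D =
       s * (D ^+ 2 * s + (W' * q) *+ (m.+2 + j.+1))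
         + (W ^+ 2 * (q * s)) *+ (m.+2 + j.+1) by rewrite /W'; ring.
    by apply: (Padd) => //; apply: (Pnat); apply: (Hsq).
pose W1 := p * s - p ^+ 2.
have PW1 : posc le W1.
  have -> : W1 = p * (s - p) by rewrite /W1; ring.
  exact: (Pair).
have PB1 : posc le (s ^+ 2 - W1 *+ 4).
  have -> : s ^+ 2 - W1 *+ 4 = (s - p *+ 2) ^+ 2 by rewrite /W1; ring.
  exact: (Psq1).
have Fin : forall j, posc le (s ^+ 2 + (p * q) *+ (4 + j)).
  move=> j; have H := Claim j 2 s W1 Ds PW1 PB1.
  apply: (Ds); apply: (Ds); rewrite -mulrA.
  have -> : (s ^+ 2 + (p * q) *+ (4 + j)) * (s * s) =
     s * (s ^+ 2 * s + (W1 * q) *+ (4 + j)) + (p ^+ 2 * (q * s)) *+ (4 + j)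
     by rewrite /W1; ring.
  by apply: (Padd) => //; apply: (Pnat); apply: (Hsq).
apply: (Lnat _ 3).
apply: (Harch _ (s ^+ 2)) => k k1.
rewrite -mulrnA addrC.
have -> : (4 * k = 4 + (4 * k - 4))%N by rewrite subnKC // leq_pmulr.
exact: Fin.
Qed.
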